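(* For the binary tree-shifts $X_4=(A,D)$ and $X_6=(A,F)$, the limit $h_{PS}$ exists and $$h_{PS}(X_4)=h_{PS}(X_6)=\sum_{n=2}^\infty\frac{1}{2^n}\log\operatorname{Fib}(n+1),$$ where $(\operatorname{Fib}(m))_{m\ge1}=(1,1,2,3,5,8,\dots)$ is the Fibonacci sequence. Moreover, for $X_4$ one has for all $n\ge3$: $p(n)=\operatorname{Fib}(n+3)\operatorname{Fib}(n+2)\prod_{\ell=3}^{n+1}\operatorname{Fib}(\ell)^{2^{n+2-\ell}}$.
   Context: Binary tree-shifts: $k=2$, directions $a_1,a_2$, alphabet $\{0,1\}$; $(P,Q)$ is the set of trees $t:\{a_1,a_2\}^*\to\{0,1\}$ with $P_{t_x,t_{xa_1}}=1$, $Q_{t_x,t_{xa_2}}=1$ for all nodes $x$. Matrices: $A=\begin{pmatrix}1&1\\1&1\end{pmatrix}$, $D=\begin{pmatrix}1&1\\1&0\end{pmatrix}$, $F=\begin{pmatrix}0&1\\1&1\end{pmatrix}$. $p(n)$ is the number of allowed blocks of length $n$ (labellings $t|_{\Delta_n}$, $\Delta_n$ the words of length $\le n$), and $h_{PS}=\lim_{n\to\infty}\frac{\log p(n)}{1+2+\cdots+2^n}$. *)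

(* Defs.v *)
From HB Require Import structures.
From mathcomp Require Import all_boot all_order all_algebra.
From mathcomp Require Import all_classical all_reals all_analysis.
Set Implicit Arguments. Unset Strict Implicit. Unset Printing Implicit Defensive.
Import Order.TTheory GRing.Theory Num.Theory.

(* Alphabet {0,1} is 'I_2. Directions a1, a2 are encoded as false, true.
   A node x in {a1,a2}^* is a seq bool; x a_i is rcons x (dir). *)
Definition tree := seq bool -> 'I_2.

Definition in_shift (P Q : 'M[nat]_2) (t : tree) : Prop :=
  forall x : seq bool,
    P (t x) (t (rcons x false)) = 1%N /\ Q (t x) (t (rcons x true)) = 1%N.

Definition Delta (n : nat) : finType := {k : 'I_n.+1 & k.-tuple bool}.

Definition block (n : nat) : finType := {ffun Delta n -> 'I_2}.

Definition allowed (P Q : 'M[nat]_2) (n : nat) (b : block n) : Prop :=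
  exists t : tree, in_shift P Q t /\ forall x : Delta n, b x = t (tval (tagged x)).

Definition pcount (P Q : 'M[nat]_2) (n : nat) : nat :=
  #|[set b : block n | `[< allowed P Q b >]]|.

Definition matA : 'M[nat]_2 := \matrix_(i < 2, j < 2) 1%N.
Definition matD : 'M[nat]_2 :=
  \matrix_(i < 2, j < 2) (if (i == 1 :> nat) && (j == 1 :> nat) then 0 else 1)%N.
Definition matF : 'M[nat]_2 :=
  \matrix_(i < 2, j < 2) (if (i == 0 :> nat) && (j == 0 :> nat) then 0 else 1)%N.

Fixpoint Fib (n : nat) : nat :=
  match n with
  | 0 => 0
  | 1 => 1
  | (m.+1 as k).+1 => Fib k + Fib m
  end.

Local Open Scope ring_scope.

Definition hPS_seq (R : realType) (P Q : 'M[nat]_2) (n : nat) : R :=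
  ln ((pcount P Q n)%:R) / ((\sum_(0 <= i < n.+1) 2 ^ i)%N)%:R.

Definition fib_partial (R : realType) (N : nat) : R :=
  \sum_(2 <= k < N) ln ((Fib k.+1)%:R : R) / (2 ^ k)%:R.

(* Main.v *)
Require Import Defs.
From HB Require Import structures.
From mathcomp Require Import all_boot all_order all_algebra.
From mathcomp Require Import all_classical all_reals all_analysis.
From mathcomp Require Import ring lra zify.
Set Implicit Arguments. Unset Strict Implicit. Unset Printing Implicit Defensive.
Import Order.TTheory GRing.Theory Num.Theory.
Import numFieldNormedType.Exports.
Local Open Scope ring_scope.
Local Open Scope classical_set_scope.
Section Comb.
Local Open Scope nat_scope.
Local Close Scope classical_set_scope.

Definition d0 n : Delta n := existT (fun k : 'I_n.+1 => k.-tuple bool) ord0 [tuple].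
Definition wd n (x : Delta n) : seq bool := tval (tagged x).
Definition toD n (s : seq bool) : Delta n :=
  odflt (d0 n) [pick x : Delta n | wd x == s].

Lemma size_wd n (x : Delta n) : size (wd x) <= n.
Proof. case: x => k t; rewrite /wd /= size_tuple -ltnS; exact: ltn_ord. Qed.

Lemma wd_inj n : injective (@wd n).
Proof.
case=> k1 t1 [k2 t2]; rewrite /wd /= => E.
have ek : k1 = k2 by apply: val_inj; rewrite /= -(size_tuple t1) -(size_tuple t2) E.
subst k2; congr existT; exact: val_inj.
Qed.

Lemma toDK n s : size s <= n -> wd (toD n s) = s.
Proof.
move=> hs; rewrite /toD; case: pickP => [x /eqP //|H].
have hs' : size s < n.+1 by [].
have := H (existT (fun k : 'I_n.+1 => k.-tuple bool) (Ordinal hs') (in_tuple s)).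
by rewrite /wd /= eqxx.
Qed.

Lemma wdK n (x : Delta n) : toD n (wd x) = x.
Proof. apply: wd_inj; exact: toDK (size_wd x). Qed.

Definition bw n (b : block n) (w : seq bool) : 'I_2 := b (toD n w).
Definition valid n (b : block n) : Prop :=
  forall w, size w < n -> matD (bw b w) (bw b (rcons w true)) = 1.

Lemma matA_E i j : matA i j = 1. Proof. by rewrite mxE. Qed.
Lemma matD_E i j : matD i j = if (i == 1 :> nat) && (j == 1 :> nat) then 0 else 1.
Proof. by rewrite mxE. Qed.

Lemma allowedD n (b : block n) : allowed matA matD b <-> valid b.
Proof.
split.
  case=> t [ht hb] w hw.
  have eq : forall w, size w <= n -> bw b w = t w.
    by move=> w' h; rewrite /bw hb; congr t; exact: toDK.
  rewrite !eq ?size_rcons ?(ltnW hw) //; exact: (ht w).2.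
move=> hv; exists (fun w => if size w <= n then bw b w else ord0); split.
  move=> x; rewrite matA_E; split=> //; rewrite size_rcons.
  case: (ltnP (size x) n) => h.
    rewrite (ltnW h); exact: hv.
  case: ifP => _; by rewrite matD_E andbF.
by move=> x; rewrite size_wd /bw wdK.
Qed.

Definition o1 : 'I_2 := @Ordinal 2 1 isT.
Definition Vset n := [set b : block n | `[< valid b >]].
Arguments Vset n : clear implicits.
Definition cnt n (s : 'I_2) := #|[set b : block n | `[< valid b >] && (bw b [::] == s)]|.

Lemma pcountD n : pcount matA matD n = #|Vset n|.
Proof.
rewrite /pcount /Vset; apply: eq_card => b; rewrite !inE.
apply/asboolP/asboolP => h; by apply/allowedD.
Qed.

Lemma ord2_neq0 (i : 'I_2) : (i != ord0) = (i == o1).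
Proof. by case: i => [[|[|]]]. Qed.

Lemma Vsplit n : #|Vset n| = cnt n ord0 + cnt n o1.
Proof.
rewrite -(cardsID [set b : block n | bw b [::] == ord0] (Vset n)).
congr (_ + _); apply: eq_card => b; rewrite /Vset !inE //.
by rewrite ord2_neq0 andbC.
Qed.

Definition sub n (d : bool) (b : block n.+1) : block n :=
  [ffun x => bw b (d :: wd x)].

Lemma bw_sub n d (b : block n.+1) w : size w <= n -> bw (sub d b) w = bw b (d :: w).
Proof. by move=> h; rewrite /bw ffunE toDK. Qed.

Definition glue n (s : 'I_2) (b1 b2 : block n) : block n.+1 :=
  [ffun x => match wd x with [::] => s | d :: w => bw (if d then b2 else b1) w end].

Lemma bw_glue n s (b1 b2 : block n) w : size w <= n.+1 ->
  bw (glue s b1 b2) w = match w with [::] => s | d :: w => bw (if d then b2 else b1) w end.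
Proof. by move=> h; rewrite /bw ffunE toDK. Qed.

Lemma sub_glue n s (b1 b2 : block n) d : sub d (glue s b1 b2) = if d then b2 else b1.
Proof.
apply/ffunP => x; rewrite ffunE bw_glue /=; last by rewrite ltnS size_wd.
by rewrite /bw wdK.
Qed.

Definition Rset n (s : 'I_2) :=
  [set b : block n | `[< valid b >] && (matD s (bw b [::]) == 1)].

Arguments Rset n s : clear implicits.
Lemma cntS n s : cnt n.+1 s = #|Vset n| * #|Rset n s|.
Proof.
rewrite /cnt -(card_in_imset (f := fun b : block n.+1 => (sub false b, sub true b))); last first.
  move=> b1 b2; rewrite !inE => /andP [_ /eqP r1] /andP [_ /eqP r2] [e1 e2].
  apply/ffunP => x; rewrite -(wdK x); move: (size_wd x).
  case: (wd x) => [|d w] hs; first by change (bw b1 [::] = bw b2 [::]); rewrite r1 r2.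
  change (bw b1 (d :: w) = bw b2 (d :: w)).
  rewrite -!bw_sub //; move: hs; case: d => hs; by rewrite ?e1 ?e2.
rewrite -cardsX; apply: eq_card => -[c1 c2]; rewrite [in RHS]inE /Vset /Rset /= !inE.
apply/imsetP/andP.
  case=> b; rewrite inE => /andP [/asboolP hv /eqP hr] [-> ->].
  have vs : forall d, `[< valid (sub d b) >].
    move=> d; apply/asboolP => w hw.
    rewrite !bw_sub ?size_rcons //; last exact: ltnW.
    exact: (hv (d :: w)).
  split; first exact: vs.
  rewrite vs /= bw_sub // -hr; apply/eqP; exact: (hv [::]).
case=> /asboolP h1 /andP [/asboolP h2 /eqP h3].
exists (glue s c1 c2); last by rewrite !sub_glue.
rewrite inE; apply/andP; split; last by rewrite bw_glue.
apply/asboolP => [[|d w]] hw.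
  by rewrite /= !bw_glue.
rewrite bw_glue; last exact: ltnW.
rewrite [rcons _ _]/= bw_glue; last by rewrite /= size_rcons.
by move: hw; case: d => hw; [apply: h2 | apply: h1].
Qed.

Lemma R0 n : Rset n ord0 = Vset n.
Proof. by apply/setP => b; rewrite !inE matD_E andbT. Qed.

Lemma R1 n : #|Rset n o1| = cnt n ord0.
Proof.
apply: eq_card => b; rewrite /Rset !inE matD_E /=; congr (_ && _).
by case: (bw b [::]) => [[|[|]]].
Qed.

Lemma cnt0 s : cnt 0 s = 1.
Proof.
rewrite /cnt (_ : [set _ | _] = [set [ffun => s]]) ?cards1 //.
apply/setP => b; rewrite !inE; apply/idP/eqP.
  case/andP => _ /eqP hr; apply/ffunP => x; rewrite ffunE -hr /bw.
  have : size (wd x) <= 0 := size_wd x.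
  by rewrite leqn0 size_eq0 => /eqP e; rewrite -e wdK.
move=> ->; apply/andP; split; last by rewrite /bw ffunE.
by apply/asboolP.
Qed.

Fixpoint G n := match n with 0 => 1 | m.+1 => G m ^ 2 * Fib m.+2 ^ 2 end.

Lemma GS n : G n.+1 = G n ^ 2 * Fib n.+2 ^ 2. Proof. by []. Qed.
Lemma FibS n : Fib n.+2 = Fib n.+1 + Fib n. Proof. by []. Qed.

Lemma closed n : cnt n ord0 = Fib n.+2 ^ 2 * G n /\ #|Vset n| = Fib n.+3 * Fib n.+2 * G n.
Proof.
elim: n => [|n [ha hT]]; first by rewrite Vsplit !cnt0.
have ha' : cnt n.+1 ord0 = Fib n.+3 ^ 2 * G n.+1.
  by rewrite cntS R0 hT GS; ring.
split => //.
rewrite Vsplit ha' cntS R1 hT ha GS (FibS n.+2); ring.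
Qed.

Lemma prodG n : \prod_(3 <= l < n + 2) Fib l ^ (2 ^ (n + 2 - l)) = G n.
Proof.
elim: n => [|[|n] IH]; first by rewrite big_geq.
  by rewrite big_geq.
rewrite GS -IH addSn big_nat_recr /=; last by rewrite addn2.
rewrite subSn // subnn expn1; congr (_ * _); last by rewrite addn2.
rewrite (expnS _ 1) expn1 -big_split /=; apply: eq_big_nat => l /andP [_ hl].
rewrite subSn; last exact: ltnW.
by rewrite expnS mul2n -addnn expnD.
Qed.

Lemma pcount_formula n :
  pcount matA matD n = Fib (n + 3) * Fib (n + 2) * \prod_(3 <= l < n + 2) Fib l ^ (2 ^ (n + 2 - l)).
Proof. by rewrite prodG pcountD (closed n).2 !addnS addn0. Qed.

End Comb.
Section Swap.
Local Close Scope classical_set_scope.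
Local Open Scope nat_scope.

Lemma matF_rev i j : matF (rev_ord i) (rev_ord j) = matD i j.
Proof. by rewrite !mxE; case: i => [[|[|]] ?]; case: j => [[|[|]] ?]. Qed.

Definition sw n (b : block n) : block n := [ffun x => rev_ord (b x)].
Lemma swK n : involutive (@sw n).
Proof. by move=> b; apply/ffunP => x; rewrite !ffunE rev_ordK. Qed.

Lemma allowed_swap n (b : block n) :
  allowed matA matF (sw b) <-> allowed matA matD b.
Proof.
split.
  case=> t [ht hb]; exists (fun w => rev_ord (t w)); split.
    move=> x; rewrite !matA_E -!matF_rev !rev_ordK; split => //; exact: (ht x).2.
  by move=> x; rewrite -hb ffunE rev_ordK.
case=> t [ht hb]; exists (fun w => rev_ord (t w)); split.
  move=> x; rewrite !matA_E !matF_rev; split => //; exact: (ht x).2.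
by move=> x; rewrite ffunE hb.
Qed.

Lemma pcountFD n : pcount matA matF n = pcount matA matD n.
Proof.
rewrite /pcount -(card_imset _ (can_inj (@swK n))).
apply: eq_card => b; rewrite [in RHS]inE; apply/imsetP/asboolP.
  case=> x hx ->; rewrite inE in hx; apply/allowed_swap; rewrite swK; exact/asboolP.
move=> h; exists (sw b); last by rewrite swK.
by rewrite inE; apply/asboolP; apply/allowed_swap.
Qed.

Lemma pcount_closed n : pcount matA matD n = Fib n.+3 * Fib n.+2 * G n.
Proof. by rewrite pcountD (closed n).2. Qed.

Lemma Fib_pos n : 0 < Fib n.+1.
Proof. elim: n => // n IH; rewrite FibS; exact: ltn_addr. Qed.

Lemma G_pos n : 0 < G n.
Proof. by elim: n => // n IH; rewrite GS muln_gt0 !expn_gt0 IH Fib_pos. Qed.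

Lemma Fib_bnd m : 4 ^ m * Fib m <= 7 ^ m.
Proof.
suff : 4 ^ m * Fib m <= 7 ^ m /\ 4 ^ m.+1 * Fib m.+1 <= 7 ^ m.+1 by case.
elim: m => [|m [h1 h2]]; first by [].
split => //; rewrite FibS mulnDr.
have e1 : 4 ^ m.+2 * Fib m.+1 <= 4 * 7 ^ m.+1.
  by move: h2; rewrite [4 ^ m.+2]expnS; nia.
have e2 : 4 ^ m.+2 * Fib m <= 16 * 7 ^ m.
  by move: h1; rewrite [4 ^ m.+2]expnS [4 ^ m.+1]expnS; nia.
apply: leq_trans (leq_add e1 e2) _.
by rewrite !expnS; lia.
Qed.

Lemma S_eq n : (\sum_(0 <= i < n.+1) 2 ^ i) + 1 = 2 ^ n.+1.
Proof.
elim: n => [|n IH]; first by rewrite big_nat1.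
rewrite big_nat_recr //= -addnA (addnC (2 ^ n.+1)) addnA IH.
by rewrite [2 ^ n.+2]expnS mul2n -addnn.
Qed.

End Swap.
Definition LF (R : realType) (k : nat) : R := ln ((Fib k)%:R : R).

Lemma lnnat_ge0 (R : realType) (k : nat) : 0 <= ln (k%:R : R).
Proof. case: k => [|k]; first by rewrite ln0. by apply: ln_ge0; rewrite ler1n. Qed.

Lemma lnnat_le (R : realType) (k : nat) : ln (k%:R : R) <= k%:R.
Proof.
case: k => [|k]; first by rewrite ln0.
rewrite -addn1 natrD addrC.
apply: le_trans (le_ln1Dx _) _; first by apply: (@lt_le_trans _ _ 0); rewrite ?ltrN10 ?ler0n.
by rewrite lerDr.
Qed.

Lemma Fib_le (R : realType) m : (Fib m)%:R <= (7/4 : R) ^+ m.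
Proof.
have h : ((4 ^ m * Fib m)%:R <= (7 ^ m)%:R :> R) by rewrite ler_nat Fib_bnd.
rewrite natrM !natrX in h.
rewrite exprMn exprVn ler_pdivlMr ?exprn_gt0 // mulrC.
exact: h.
Qed.

Lemma LF_ge0 (R : realType) m : 0 <= LF R m.
Proof. exact: lnnat_ge0. Qed.

Lemma LF_le (R : realType) m : LF R m <= (7/4 : R) ^+ m.
Proof. exact: le_trans (lnnat_le _ _) (Fib_le _ _). Qed.

Lemma q_eq (R : realType) k : (7/4 : R) ^+ k = (7/8) ^+ k * 2 ^+ k.
Proof. rewrite -exprMn; congr (_ ^+ _); field; by rewrite ?pnatr_eq0. Qed.

Lemma fp1 (R : realType) : fib_partial R 1 = 0.
Proof. by rewrite /fib_partial big_geq. Qed.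

Lemma fpS (R : realType) N :
  fib_partial R N.+2 = fib_partial R N.+1 + LF R N.+2 / (2 ^ N.+1)%:R.
Proof.
case: N => [|N].
  by rewrite /fib_partial !big_geq // /LF /= ln1 mul0r addr0.
by rewrite /fib_partial big_nat_recr.
Qed.

Lemma fp_ge0 (R : realType) N : 0 <= fib_partial R N.
Proof.
rewrite /fib_partial; apply: sumr_ge0 => k _; apply: divr_ge0; last exact: ler0n.
exact: lnnat_ge0.
Qed.

Lemma fp_incr (R : realType) N : fib_partial R N <= fib_partial R N.+1.
Proof.
case: N => [|N]; first by rewrite fp1 /fib_partial big_geq.
rewrite fpS lerDl; apply: divr_ge0; [exact: LF_ge0 | exact: ler0n].
Qed.

Lemma fp_bnd (R : realType) N : fib_partial R N <= 14 - 14 * (7/8 : R) ^+ N.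
Proof.
elim: N => [|N IH].
  by rewrite /fib_partial big_geq // expr0 mulr1 subrr.
case: N IH => [|N] IH.
  by rewrite fp1 expr1; lra.
rewrite fpS.
have ht : LF R N.+2 / (2 ^ N.+1)%:R <= 7/4 * (7/8) ^+ N.+1.
  rewrite natrX ler_pdivrMr ?exprn_gt0 //.
  apply: le_trans (LF_le _ _) _.
  by rewrite exprS q_eq mulrA.
have -> : (7/8 : R) ^+ N.+2 = 7/8 * (7/8) ^+ N.+1 by rewrite exprS.
lra.
Qed.

Lemma fp_cvg (R : realType) : exists l : R, fib_partial R @ \oo --> l.
Proof.
exists (limn (fib_partial R)).
apply: nondecreasing_is_cvgn.
  by apply/nondecreasing_seqP => n; exact: fp_incr.
exists 14 => _ [n _ <-].
apply: le_trans (fp_bnd _ _) _.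
by rewrite lerBlDr lerDl mulr_ge0 // exprn_ge0.
Qed.
Definition Ssum (n : nat) : nat := (\sum_(0 <= i < n.+1) 2 ^ i)%N.

Lemma Ssum_R (R : realType) n : (Ssum n)%:R = (2 : R) ^+ n.+1 - 1.
Proof.
have h := S_eq n.
have : ((Ssum n + 1)%N%:R : R) = (2 ^ n.+1)%N%:R by rewrite /Ssum h.
rewrite natrD natrX => <-; by rewrite addrK.
Qed.

Lemma two_pow_ge1 (R : realType) n : 1 <= (2 : R) ^+ n.
Proof. by apply: exprn_ege1; rewrite ler1n. Qed.

Lemma lnG (R : realType) n : ln ((G n)%:R : R) = 2 ^+ n.+1 * fib_partial R n.+1.
Proof.
elim: n => [|n IH]; first by rewrite fp1 mulr0 /= ln1.
have g0 : (0 : R) < (G n)%:R by rewrite ltr0n G_pos.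
have f0 : (0 : R) < (Fib n.+2)%:R by rewrite ltr0n Fib_pos.
rewrite GS natrM !natrX lnM; last 2 first.
- by rewrite posrE exprn_gt0.
- by rewrite posrE exprn_gt0.
rewrite !lnXn // IH fpS natrX /LF [2 ^+ n.+2]exprS.
have hp : (2 : R) ^+ n.+1 != 0 by rewrite expf_neq0 // pnatr_eq0.
move: hp; move: (2 ^+ n.+1) (fib_partial R n.+1) (ln _) => p f L hp.
rewrite !mulr2n; field.
exact: hp.
Qed.
Definition ee (R : realType) n : R :=
  (LF R n.+3 + LF R n.+2 + fib_partial R n.+1) / (Ssum n)%:R.

Lemma hPS_eq (R : realType) n :
  hPS_seq R matA matD n = ee R n + fib_partial R n.+1.
Proof.
rewrite /hPS_seq pcount_closed -/(Ssum n) /ee.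
rewrite !natrM lnM ?posrE ?mulr_gt0 ?ltr0n ?G_pos ?Fib_pos //.
rewrite lnM ?posrE ?ltr0n ?Fib_pos // lnG Ssum_R -/(LF R n.+3) -/(LF R n.+2).
have h2 : (2 : R) <= 2 ^+ n.+1.
  by rewrite exprS -{1}[2]mulr1 ler_pM2l ?two_pow_ge1.
field.
by rewrite subr_eq0 gt_eqF // (lt_le_trans _ h2) // ltr1n.
Qed.

Lemma ee_ge0 (R : realType) n : 0 <= ee R n.
Proof.
apply: divr_ge0; last exact: ler0n.
by rewrite !addr_ge0 ?LF_ge0 ?fp_ge0.
Qed.

Lemma ee_le (R : realType) n : ee R n <= 30 * (7/8) ^+ n.
Proof.
have hp := two_pow_ge1 R n.
have hS : 0 < (Ssum n)%:R :> R by rewrite Ssum_R exprS; lra.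
rewrite /ee ler_pdivrMr // Ssum_R exprS.
have e3 : (7/4 : R) ^+ n.+3 = 343/64 * (7/4) ^+ n.
  rewrite -(addn3 n) exprD mulrC; congr (_ * _); rewrite !exprS expr0; field.
  by rewrite ?pnatr_eq0.
have e2 : (7/4 : R) ^+ n.+2 = 49/16 * (7/4) ^+ n.
  rewrite -(addn2 n) exprD mulrC; congr (_ * _); rewrite !exprS expr0; field.
  by rewrite ?pnatr_eq0.
have l3 := LF_le R n.+3; have l2 := LF_le R n.+2.
have f := fp_bnd R n.+1.
have x0 : 0 <= (7/8 : R) ^+ n.+1 by rewrite exprn_ge0.
have x0' : 0 <= (7/8 : R) ^+ n by rewrite exprn_ge0.
rewrite e3 q_eq in l3; rewrite e2 q_eq in l2.
have hq : 1 <= (7/8 : R) ^+ n * 2 ^+ n by rewrite -q_eq exprn_ege1 //; lra.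
have hxp : (7/8 : R) ^+ n <= (7/8 : R) ^+ n * 2 ^+ n.
  by rewrite -subr_ge0 -{2}[(7/8 : R) ^+ n]mulr1 -mulrBr mulr_ge0 // subr_ge0.
rewrite (_ : 30 * (7/8) ^+ n * (2 * 2 ^+ n - 1) = 60 * ((7/8 : R) ^+ n * 2 ^+ n) - 30 * (7/8) ^+ n); last by ring.
move: l3 l2 f x0 x0' hq hxp.
move: (LF R n.+3) (LF R n.+2) (fib_partial R n.+1) ((7/8 : R) ^+ n.+1) ((7/8 : R) ^+ n * 2 ^+ n) ((7/8 : R) ^+ n).
move=> a b c y q x *.
lra.
Qed.
Theorem mainTheorem13 (R : realType) :
  (exists l : R,
      fib_partial R @ \oo --> l /\
      hPS_seq R matA matD @ \oo --> l /\
      hPS_seq R matA matF @ \oo --> l) /\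
  (forall n : nat, (3 <= n)%N ->
      pcount matA matD n =
        (Fib (n + 3) * Fib (n + 2) *
         \prod_(3 <= l < n + 2) Fib l ^ (2 ^ (n + 2 - l)))%N).
Proof.
split; last by move=> n _; exact: pcount_formula.
have [l hl] := fp_cvg R.
have hD : hPS_seq R matA matD @ \oo --> l.
  have -> : hPS_seq R matA matD = (fun n => ee R n) + (fun n => fib_partial R n.+1).
    by apply/funext => n; rewrite hPS_eq.
  rewrite -[l]add0r; apply: cvgD.
    apply: (@squeeze_cvgr _ _ _ _ (fun=> 0) (geometric 30 (7/8))).
    - by apply: nearW => n; rewrite ee_ge0 ee_le.
    - exact: cvg_cst.
    - by apply: cvg_geometric; rewrite ger0_norm; lra.
  by rewrite (cvg_shiftS (fib_partial R)).
exists l; split => //; split => //.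
have -> : hPS_seq R matA matF = hPS_seq R matA matD.
  by apply/funext => n; rewrite /hPS_seq pcountFD.
exact: hD.
Qed.
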